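(* For all sufficiently large $n$, $$\tfrac12 \log_2 n \le h_3(n,\{(4,1),(4,3)\}) < 4(\log_2 n)^2.$$
   Context: For an $r$-uniform hypergraph ($r$-graph) $H$, a homogeneous set is a set of vertices that is either a clique (every $r$-subset is an edge) or a coclique (no $r$-subset is an edge); $h(H)$ denotes the size of a largest homogeneous set. An $(m,f)$-graph is an $r$-graph with $m$ vertices and $f$ edges; $H$ is $(m,f)$-free if it contains no induced sub-hypergraph that is an $(m,f)$-graph. For a set $Q$ of pairs $(m,f)$, $H$ is $Q$-free if it is $(m,f)$-free for every $(m,f)\in Q$. $h_r(n,Q)$ is the minimum of $h(H)$ over all $n$-vertex $Q$-free $r$-graphs $H$. *)

(* Defs.v *)
From mathcomp Require Import all_boot.
From Stdlib Require Import Reals.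
Set Implicit Arguments. Unset Strict Implicit. Unset Printing Implicit Defensive.

Section Hyper.
Variable T : finType.

Definition uniform (r : nat) (E : {set {set T}}) : bool :=
  [forall e in E, #|e| == r].

Definition is_clique (r : nat) (E : {set {set T}}) (S : {set T}) : bool :=
  [forall e : {set T}, ((e \subset S) && (#|e| == r)) ==> (e \in E)].

Definition is_coclique (r : nat) (E : {set {set T}}) (S : {set T}) : bool :=
  [forall e : {set T}, ((e \subset S) && (#|e| == r)) ==> (e \notin E)].

Definition homogeneous (r : nat) (E : {set {set T}}) (S : {set T}) : bool :=
  is_clique r E S || is_coclique r E S.

Definition hnum (r : nat) (E : {set {set T}}) : nat :=
  \max_(S : {set T} | homogeneous r E S) #|S|.

Definition edges_in (E : {set {set T}}) (S : {set T}) : nat :=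
  #|[set e in E | e \subset S]|.

Definition mf_free (E : {set {set T}}) (m f : nat) : bool :=
  ~~ [exists S : {set T}, (#|S| == m) && (edges_in E S == f)].

Definition Q_free (E : {set {set T}}) (Q : seq (nat * nat)) : bool :=
  all (fun p => mf_free E p.1 p.2) Q.

End Hyper.

(* The default value n of the min is harmless since h(H) <= n always
   (and the family is nonempty in the relevant case: the empty r-graph). *)
Definition h_rnQ (r n : nat) (Q : seq (nat * nat)) : nat :=
  \big[minn/n]_(E : {set {set 'I_n}} | uniform r E && Q_free E Q) hnum r E.

Definition log2 (x : R) : R := (ln x / ln 2)%R.

(* Main.v *)
Require Import Defs.
From mathcomp Require Import all_boot zify.
From Stdlib Require Import Reals Lra.
From mathcomp Require Import ssrnat.
Set Implicit Arguments. Unset Strict Implicit. Unset Printing Implicit Defensive.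

Section Gen.
Variable T : finType.

Lemma card_setin (A : {set T}) (P : pred T) :
  #|[set x in A | P x]| = \sum_(x in A) P x.
Proof.
rewrite -sum1_card big_mkcond /= [RHS]big_mkcond /=.
apply: eq_bigr => x _; rewrite !inE; by case: (x \in A); case: (P x).
Qed.

Lemma edges_in_del (E : {set {set T}}) (F : {set T}) :
  (forall e, e \in E -> #|e| = #|F|.-1) -> 0 < #|F| ->
  edges_in E F = #|[set u in F | F :\ u \in E]|.
Proof.
move=> hE hF; rewrite /edges_in.
have -> : [set e in E | e \subset F] = [set F :\ u | u in [set u in F | F :\ u \in E]].
  apply/setP=> e; rewrite inE; apply/andP/imsetP.
  - case=> eE eF.
    have h1 : #|F :\: e| == 1 by rewrite cardsDS // (hE _ eE); apply/eqP; lia.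
    case/cards1P: h1 => u hu.
    have uF : u \in F.
      have : u \in F :\: e by rewrite hu inE.
      by rewrite inE => /andP[].
    have Fe : F :\ u = e.
      rewrite -hu setDDr setDv set0U; exact/setIidPr.
    by exists u; rewrite // inE uF Fe.
  - case=> u; rewrite inE => /andP[uF ue] ->; split; [done | apply: subD1set].
rewrite card_in_imset //.
move=> u1 u2; rewrite !inE => /andP[u1F _] /andP[u2F _] h.
case: (eqVneq u1 u2) => // ne.
have : u1 \in F :\ u2 by rewrite !inE u1F andbT.
by rewrite -h !inE eqxx.
Qed.

Lemma hom_sub r (E : {set {set T}}) (S Sp : {set T}) :
  Sp \subset S -> homogeneous r E S -> homogeneous r E Sp.
Proof.
move=> sS; rewrite /homogeneous /is_clique /is_coclique => /orP[]/forallP h;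
 apply/orP; [left|right]; apply/forallP=> e; apply/implyP=> /andP[eS ee];
 apply: (implyP (h e)); rewrite ee andbT; exact: subset_trans sS.
Qed.


Definition clq (r : rel T) (S : {set T}) :=
  forall x y, x \in S -> y \in S -> x != y -> r x y.
Definition ind (r : rel T) (S : {set T}) :=
  forall x y, x \in S -> y \in S -> x != y -> ~~ r x y.

Lemma ramsey (r : rel T) : symmetric r -> forall c a b (A : {set T}),
  a + b = c -> 2 ^ c <= #|A| ->
  exists S : {set T}, S \subset A /\ ((a <= #|S| /\ clq r S) \/ (b <= #|S| /\ ind r S)).
Proof.
move=> rs; elim=> [|c IH] a b A hab hA.
  exists set0; split; first exact: sub0set.
  by left; split; [lia | move=> x y; rewrite inE].
case: a hab => [|a] hab.
  by exists set0; split; [exact: sub0set | left; split; [done|move=> x y; rewrite inE]].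
case: b hab => [|b] hab.
  by exists set0; split; [exact: sub0set | right; split; [done|move=> x y; rewrite inE]].
have h0 : 0 < 2 ^ c.+1 by rewrite expn_gt0.
have : 0 < #|A| by lia.
case/card_gt0P => v vA.
set B := [set x | r v x].
set N := (A :\ v) :&: B.
set M := (A :\ v) :\: B.
have hNM : #|N| + #|M| = #|A| - 1.
  by rewrite /N /M cardsID (cardsD1 v A) vA; lia.
have h2 : 2 ^ c.+1 = 2 ^ c + 2 ^ c by rewrite expnS; lia.
have [hN | hN] := leqP (2 ^ c) #|N|.
  have [S [SN [[hS cS]|[hS iS]]]] := IH a b.+1 N ltac:(lia) hN.
  - have vS : v \notin S.
      apply/negP=> /(subsetP SN); by rewrite !inE eqxx.
    exists (v |: S); split.
      apply/subsetP=> x; rewrite !inE => /orP[/eqP->//|/(subsetP SN)].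
      by rewrite !inE => /andP[/andP[]].
    left; split; first by rewrite cardsU1 vS; lia.
    have rvS : forall x, x \in S -> r v x.
      by move=> x /(subsetP SN); rewrite !inE => /andP[_].
    move=> x y; rewrite !inE => /orP[/eqP->|xS] /orP[/eqP->|yS]; rewrite ?eqxx //.
    + by move=> _; apply: rvS.
    + by move=> _; rewrite rs; apply: rvS.
    + exact: cS.
  - exists S; split; last by right.
    by apply: subset_trans SN _; apply: subset_trans (subsetIl _ _) (subD1set _ _).
have hM : 2 ^ c <= #|M| by lia.
have [S [SM [[hS cS]|[hS iS]]]] := IH a.+1 b M ltac:(lia) hM.
- exists S; split; last by left.
  by apply: subset_trans SM _; apply: subset_trans (subsetDl _ _) (subD1set _ _).
- have vS : v \notin S.
    apply/negP=> /(subsetP SM); by rewrite !inE eqxx andbF.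
  exists (v |: S); split.
    apply/subsetP=> x; rewrite !inE => /orP[/eqP->//|/(subsetP SM)].
    by rewrite !inE => /andP[_ /andP[]].
  right; split; first by rewrite cardsU1 vS; lia.
  have rvS : forall x, x \in S -> ~~ r v x.
    by move=> x /(subsetP SM); rewrite !inE => /andP[].
  move=> x y; rewrite !inE => /orP[/eqP->|xS] /orP[/eqP->|yS]; rewrite ?eqxx //.
  + by move=> _; apply: rvS.
  + by move=> _; rewrite rs; apply: rvS.
  + exact: iS.
Qed.


Lemma pair_of (e : {set T}) u : u \in e -> #|e| = 3 ->
  exists y z, e :\ u = [set y; z] /\ [/\ y \in e, z \in e, y != z, y != u & z != u].
Proof.
move=> ue he.
have : #|e :\ u| == 2 by move: (cardsD1 u e); rewrite ue he; lia.
case/cards2P=> y [z [yz hyz]].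
have : y \in e :\ u by rewrite hyz !inE eqxx.
have : z \in e :\ u by rewrite hyz !inE eqxx orbT.
rewrite !inE => /andP[zu ze] /andP[yu ye].
by exists y, z; split.
Qed.

Lemma mf_freeE (E : {set {set T}}) m f (F : {set T}) :
  mf_free E m f -> #|F| = m -> edges_in E F <> f.
Proof.
move=> /existsPn /(_ F) h hF hE; move: h; by rewrite hF hE !eqxx.
Qed.

Lemma hom_link (E : {set {set T}}) (w : T) (S : {set T}) :
  uniform 3 E -> mf_free E 4 1 -> mf_free E 4 3 -> w \notin S ->
  (clq (fun x y => (w |: [set x; y]) \in E) S \/
   ind (fun x y => (w |: [set x; y]) \in E) S) -> homogeneous 3 E (w |: S).
Proof.
move=> hu f1 f3 wS hS.
have hu' : forall e, e \in E -> #|e| = 3.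
  by move=> e eE; move: (forallP hu e); rewrite eE => /eqP.
have H2 : forall e : {set T}, e \subset w |: S -> w \in e -> #|e| = 3 ->
   exists y z, [/\ y \in S, z \in S, y != z & e = w |: [set y; z]].
  move=> e eS we he; have [y [z [hyz [ye ze yz yw zw]]]] := pair_of we he.
  have yS : y \in S by move: (subsetP eS y ye); rewrite !inE (negbTE yw).
  have zS : z \in S by move: (subsetP eS z ze); rewrite !inE (negbTE zw).
  by exists y, z; split=> //; rewrite -hyz setD1K.
have H1 : forall e : {set T}, e \subset S -> #|e| = 3 -> forall u, u \in e ->
   exists y z, [/\ y \in S, z \in S, y != z & (w |: e) :\ u = w |: [set y; z]].
  move=> e eS he u ue; have [y [z [hyz [ye ze yz yu zu]]]] := pair_of ue he.
  exists y, z; split; [exact: (subsetP eS) | exact: (subsetP eS) | done |].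
  rewrite -hyz; apply/setP=> x; rewrite !inE.
  have uw : u != w by apply/eqP=> uw; move: wS; rewrite -uw (subsetP eS u ue).
  case: (eqVneq x u) => [->|//]; by rewrite (negbTE uw).
have H3 : forall e : {set T}, e \subset S -> #|e| = 3 ->
   edges_in E (w |: e) = #|[set u in w |: e | (w |: e) :\ u \in E]| /\ #|w |: e| = 4.
  move=> e eS he.
  have we : w \notin e by apply/negP=> /(subsetP eS); rewrite (negbTE wS).
  have h4 : #|w |: e| = 4 by rewrite cardsU1 we he.
  split=> //; apply: edges_in_del; last by rewrite h4.
  by move=> e' /hu'; rewrite h4.
have sub : forall e : {set T}, e \subset w |: S -> w \notin e -> e \subset S.
  move=> e eS we; apply/subsetP=> x xe; move: (subsetP eS x xe); rewrite !inE.
  case: (eqVneq x w) => [xw|//]; by move: we; rewrite -xw xe.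
rewrite /homogeneous; case: hS => [hc|hi].
- apply/orP; left; apply/forallP=> e; apply/implyP=> /andP[eS /eqP he].
  case: (boolP (w \in e)) => we.
    by have [y [z [yS zS yz ->]]] := H2 e eS we he; apply: hc.
  have eS' := sub e eS we.
  have [hE h4] := H3 e eS' he.
  apply/negPn/negP=> eE.
  have : [set u in w |: e | (w |: e) :\ u \in E] = e.
    apply/setP=> u; rewrite !inE.
    case: (boolP (u \in e)) => ue.
      have [y [z [yS zS yz ->]]] := H1 e eS' he u ue.
      by rewrite orbT (hc y z yS zS yz).
    rewrite orbF; case: (eqVneq u w) => [->|//] /=.
    by rewrite setU1K // (negbTE eE).
  move=> h; apply: (mf_freeE f3 h4); by rewrite hE h he.
- apply/orP; right; apply/forallP=> e; apply/implyP=> /andP[eS /eqP he].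
  case: (boolP (w \in e)) => we.
    by have [y [z [yS zS yz ->]]] := H2 e eS we he; apply: hi.
  have eS' := sub e eS we.
  have [hE h4] := H3 e eS' he.
  apply/negP=> eE.
  have : [set u in w |: e | (w |: e) :\ u \in E] = [set w].
    apply/setP=> u; rewrite !inE.
    case: (boolP (u \in e)) => ue.
      have [y [z [yS zS yz ->]]] := H1 e eS' he u ue.
      rewrite orbT (negbTE (hi y z yS zS yz)).
      by case: (eqVneq u w) => // uw; move: we; rewrite -uw ue.
    rewrite orbF; case: (eqVneq u w) => [->|//] /=.
    by rewrite setU1K.
  move=> h; apply: (mf_freeE f1 h4); by rewrite hE h cards1.
Qed.

End Gen.

Lemma hnum_lower n (E : {set {set 'I_n}}) s :
  uniform 3 E -> Q_free E [:: (4, 1); (4, 3)] -> 4 ^ s <= n.-1 -> s.+1 <= hnum 3 E.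
Proof.
move=> hu /and3P[f1 f3 _] hn.
have h0 : 0 < 4 ^ s by rewrite expn_gt0.
have n0 : 0 < n by lia.
pose w := Ordinal n0.
set A := [set: 'I_n] :\ w.
have hA : #|A| = n.-1.
  have := cardsD1 w [set: 'I_n]; rewrite cardsT card_ord inE /A.
  by move=> h; rewrite [in RHS]h add1n.
pose r := fun x y : 'I_n => (w |: [set x; y]) \in E.
have rs : symmetric r by move=> x y; rewrite /r [[set x; y]]setUC.
have h4 : 2 ^ (s + s) = 4 ^ s by rewrite addnn -mul2n expnM.
have hh : 2 ^ (s + s) <= #|A| by rewrite h4 hA.
have [S [SA hS]] := @ramsey _ r rs (s + s) s s A (erefl _) hh.
have wS : w \notin S by apply/negP=> /(subsetP SA); rewrite !inE eqxx.
have hom : homogeneous 3 E (w |: S).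
  apply: hom_link => //; case: hS => [[_ ?]|[_ ?]]; by [left|right].
have hc : s.+1 <= #|w |: S|.
  by rewrite cardsU1 wS; case: hS => [[? _]|[? _]]; lia.
apply: leq_trans hc _.
exact: (@leq_bigmax_cond _ (homogeneous 3 E) (fun S : {set 'I_n} => #|S|) (w |: S) hom).
Qed.

Section Up.
Variable n : nat.

Definition Eg (g : {ffun {set 'I_n} -> bool}) : {set {set 'I_n}} :=
  [set e : {set 'I_n} | (#|e| == 3) && odd #|[set x in e | g (e :\ x)]|].

Lemma Eg_uniform g : uniform 3 (Eg g).
Proof. by apply/forallP=> e; apply/implyP; rewrite inE => /andP[]. Qed.

Lemma odd_card_odd (A : {set 'I_n}) (c : 'I_n -> nat) :
  odd #|[set u in A | odd (c u)]| = odd (\sum_(u in A) c u).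
Proof.
rewrite card_setin.
apply: (big_ind2 (fun x y => odd x = odd y)) => //.
  by move=> x1 x2 y1 y2 h1 h2; rewrite !oddD h1 h2.
by move=> u _; case: (odd (c u)).
Qed.

Lemma sym_even (A : {set 'I_n}) (f : 'I_n -> 'I_n -> nat) :
  (forall x y, f x y = f y x) -> ~~ odd (\sum_(u in A) \sum_(x in A :\ u) f u x).
Proof.
move=> fs.
have sp : forall u, \sum_(x in A :\ u) f u x =
   \sum_(x in A | x < u) f u x + \sum_(x in A | u < x) f u x.
  move=> u; rewrite (bigID (fun x : 'I_n => x < u)) /=; congr (_ + _); apply: eq_bigl => x;
  rewrite !inE; case: (ltngtP x u) => h;
  (first [ have xu : (x == u) = false by apply/negbTE/eqP => xu; move: h; rewrite xu ltnn
             | have xu : x = u by apply: val_inj ]);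
  by rewrite ?xu ?eqxx /= ?andbT ?andbF ?ltnn.
under eq_bigr do rewrite sp.
rewrite big_split /=.
have -> : \sum_(u in A) \sum_(x in A | u < x) f u x =
          \sum_(u in A) \sum_(x in A | x < u) f u x.
  rewrite (eq_bigr (fun u : 'I_n => \sum_(x in A) (if u < x then f u x else 0))); last first.
    by move=> u _; rewrite big_mkcondr.
  rewrite exchange_big /=; apply: eq_bigr => u _.
  rewrite big_mkcondr; apply: eq_bigr => x _.
  by rewrite fs.
by rewrite oddD addbb.
Qed.

Lemma Eg_even g (F : {set 'I_n}) : #|F| = 4 -> ~~ odd (edges_in (Eg g) F).
Proof.
move=> h4.
rewrite (@edges_in_del _ (Eg g) F); last by rewrite h4.
  2: by move=> e; rewrite inE h4 => /andP[/eqP].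
have -> : [set u in F | F :\ u \in Eg g] =
          [set u in F | odd (\sum_(x in F :\ u) g (F :\ u :\ x))].
  apply/setP=> u; rewrite !inE; case: (boolP (u \in F)) => //= uF.
  have h3 : #|F :\ u| = 3 by move: (cardsD1 u F); rewrite uF h4; lia.
  by rewrite h3 eqxx /= card_setin.
rewrite odd_card_odd; apply: sym_even => x y.
by rewrite !setDDl [[set x] :|: _]setUC.
Qed.

Lemma Eg_Qfree g : Q_free (Eg g) [:: (4, 1); (4, 3)].
Proof.
rewrite /Q_free /= /mf_free andbT; apply/andP; split; apply/existsPn => F;
apply/negP => /andP[/eqP hF /eqP he]; move: (Eg_even g hF); by rewrite he.
Qed.

End Up.

Lemma card_bigcup_le (T' I : finType) (P : pred I) (A : I -> {set T'}) :
  #|\bigcup_(i | P i) A i| <= \sum_(i | P i) #|A i|.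
Proof.
elim/big_rec2: _ => [|i m U _ h]; first by rewrite cards0.
have := cardsUI (A i) U; lia.
Qed.

Section Count.
Variable n : nat.
Local Notation G := {ffun {set 'I_n} -> bool}.

Definition Pset (S : {set 'I_n}) v :=
  [set p : {set 'I_n} | p \subset S :\ v & #|p| == 2].
Definition Fg (g : G) v (p : {set 'I_n}) := odd #|[set z in p | g ((v |: p) :\ z)]|.
Definition badS (S : {set 'I_n}) (v : 'I_n) (b : bool) := [set g : G | [forall p in Pset S v, g p == b (+) Fg g v p]].

Lemma hom_bad (S : {set 'I_n}) (v : 'I_n) (g : G) : v \in S -> homogeneous 3 (Eg g) S ->
  g \in badS S v (is_clique 3 (Eg g) S).
Proof.
move=> vS hom; rewrite inE; apply/forallP=> p; apply/implyP; rewrite inE => /andP[pS /eqP p2].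
have vp : v \notin p by apply/negP => /(subsetP pS); rewrite !inE eqxx.
have tS : v |: p \subset S.
  apply/subsetP => x; rewrite !inE => /orP[/eqP->//| /(subsetP pS)].
  by rewrite !inE => /andP[].
have t3 : #|v |: p| = 3 by rewrite cardsU1 vp p2.
have tE : (v |: p \in Eg g) = is_clique 3 (Eg g) S.
  case: (boolP (is_clique 3 (Eg g) S)) => hc.
    by move: (forallP hc (v |: p)); rewrite tS t3 eqxx => /implyP; apply.
  have hcc : is_coclique 3 (Eg g) S by move: hom; rewrite /homogeneous (negbTE hc).
  by move: (forallP hcc (v |: p)); rewrite tS t3 eqxx /= => /negbTE.
have tE2 : (v |: p \in Eg g) = g p (+) Fg g v p.
  rewrite inE t3 eqxx /= card_setin big_setU1 //= setU1K // oddD oddb /Fg card_setin.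
  done.
by rewrite -tE tE2 addbK.
Qed.

Lemma count_bad (S : {set 'I_n}) (v : 'I_n) (b : bool) : v \in S ->
  #|badS S v b| * 2 ^ 'C(#|S|.-1, 2) <= #|G|.
Proof.
move=> vS.
have hP : #|Pset S v| = 'C(#|S|.-1, 2).
  by rewrite cards_draws; have := cardsD1 v S; rewrite vS => ->.
rewrite -hP -card_powerset -cardsX.
set D := setX (badS S v b) (powerset (Pset S v)).
pose phi := fun gc : G * {set {set 'I_n}} =>
  [ffun q => if q \in Pset S v then q \in gc.2 else gc.1 q] : G.
rewrite -(@card_in_imset _ _ phi D); first exact: max_card.
move=> [g c] [g' c']; rewrite !inE /= => /andP[gb cP] /andP[g'b c'P] heq.
have hq : forall q, phi (g, c) q = phi (g', c') q by move=> q; rewrite heq.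
have cc : c = c'.
  apply/setP => q; case: (boolP (q \in Pset S v)) => qP.
    by have := hq q; rewrite !ffunE /= qP.
  have h1 : q \notin c by apply: contra qP; apply: (subsetP cP).
  have h2 : q \notin c' by apply: contra qP; apply: (subsetP c'P).
  by rewrite (negbTE h1) (negbTE h2).
have gg : g = g'.
  apply/ffunP => q; case: (boolP (q \in Pset S v)) => qP; last first.
    by have := hq q; rewrite !ffunE /= (negbTE qP).
  move: gb g'b => /forallP /(_ q) gb /forallP /(_ q) g'b.
  move: gb g'b; rewrite qP /= => /eqP -> /eqP ->; congr (_ (+) _).
  rewrite /Fg; suff -> : [set z in q | g ((v |: q) :\ z)] = [set z in q | g' ((v |: q) :\ z)] by [].
  apply/setP => z; rewrite !inE.
  case: (boolP (z \in q)) => //= zq.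
  have nP : (v |: q) :\ z \notin Pset S v.
    move: qP; rewrite !inE => /andP[qS _]; apply/negP => /andP[hS _].
    have zv : z != v by move: (subsetP qS z zq); rewrite !inE => /andP[].
    have : v \in (v |: q) :\ z by rewrite !inE eqxx eq_sym zv.
    by move/(subsetP hS); rewrite !inE eqxx.
  by have := hq ((v |: q) :\ z); rewrite !ffunE /= (negbTE nP).
by rewrite gg cc.
Qed.

Definition bad k := [set g : G | [exists S : {set 'I_n}, (#|S| == k) && homogeneous 3 (Eg g) S]].

Lemma bad_sub k : 0 < k -> bad k \subset
  \bigcup_(S in [set S : {set 'I_n} | #|S| == k])
     \bigcup_(v in S) \bigcup_(b in [set: bool]) badS S v b.
Proof.
move=> k0; apply/subsetP=> g; rewrite inE => /existsP[S /andP[/eqP hS hom]].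
have : 0 < #|S| by rewrite hS.
case/card_gt0P => v vS.
apply/bigcupP; exists S; first by rewrite inE hS.
apply/bigcupP; exists v => //.
apply/bigcupP; exists (is_clique 3 (Eg g) S); first by rewrite inE.
exact: hom_bad.
Qed.

Lemma card_bad k : 0 < k ->
  #|bad k| * 2 ^ 'C(k.-1, 2) <= 'C(n, k) * (k * (2 * #|G|)).
Proof.
move=> k0.
have h1 : #|bad k| <= \sum_(S in [set S : {set 'I_n} | #|S| == k])
      \sum_(v in S) \sum_(b in [set: bool]) #|badS S v b|.
  apply: leq_trans (subset_leq_card (bad_sub k0)) _.
  apply: leq_trans (card_bigcup_le _ _) _; apply: leq_sum => S _.
  apply: leq_trans (card_bigcup_le _ _) _; apply: leq_sum => v _.
  exact: card_bigcup_le.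
apply: leq_trans (leq_mul h1 (leqnn _)) _.
rewrite big_distrl /=.
apply: leq_trans (_ : _ <= \sum_(S in [set S : {set 'I_n} | #|S| == k]) (k * (2 * #|G|))) _.
  apply: leq_sum => S; rewrite inE => /eqP hS.
  rewrite big_distrl /=.
  apply: leq_trans (_ : _ <= \sum_(v in S) (2 * #|G|)) _; last by rewrite sum_nat_const hS.
  apply: leq_sum => v vS; rewrite big_distrl /=.
  apply: leq_trans (_ : _ <= \sum_(b in [set: bool]) #|G|) _; last by rewrite sum_nat_const cardsT card_bool.
  apply: leq_sum => b _; rewrite -hS; exact: count_bad.
by rewrite sum_nat_const card_draws card_ord.
Qed.

End Count.

Lemma bigmin_le_seq (I : eqType) (r : seq I) (P : pred I) (F : I -> nat) x0 i :
  i \in r -> P i -> \big[minn/x0]_(j <- r | P j) F j <= F i.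
Proof.
elim: r => [//|a r IH]; rewrite inE big_cons => /orP[/eqP <-|ir] Pi.
  by rewrite Pi geq_minl.
case: (P a); [apply: leq_trans (geq_minr _ _) _; exact: IH | exact: IH].
Qed.

Definition QQ := [:: (4, 1); (4, 3)].

Lemma h_upper n k : 0 < k -> 'C(n, k) * (k * 2) < 2 ^ 'C(k.-1, 2) ->
  h_rnQ 3 n QQ < k.
Proof.
move=> k0 hC.
set N := #|{ffun {set 'I_n} -> bool}|.
have N0 : 0 < N.
  by apply/card_gt0P; exists [ffun => false].
have hb : #|bad n k| < N.
  have := card_bad n k0; rewrite -/N => h.
  have h2 : 0 < 2 ^ 'C(k.-1, 2) by rewrite expn_gt0.
  rewrite -(ltn_pmul2r h2); apply: leq_ltn_trans h _.
  have e : 'C(n, k) * (k * (2 * N)) = ('C(n, k) * (k * 2)) * N by nia.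
  by rewrite e [N * _]mulnC ltn_pmul2r.
have [g gb] : exists g, g \notin bad n k.
  case: (pickP [pred g | g \notin bad n k]) => [g gb | hall]; first by exists g.
  have : N <= #|bad n k|.
    rewrite /N -cardsT; apply: subset_leq_card; apply/subsetP=> g _.
    by move: (hall g) => /= /negbFE.
  by rewrite leqNgt hb.
have hg : hnum 3 (Eg g) < k.
  rewrite ltnNge; apply/negP => hk.
  have A0 : 0 < #|homogeneous 3 (Eg g)|.
    apply/card_gt0P; exists set0; rewrite /in_mem /= /homogeneous /is_clique.
    apply/orP; left; apply/forallP=> e; apply/implyP=> /andP[e0 /eqP e3].
    by move: e0; rewrite subset0 => /eqP e0; move: e3; rewrite e0 cards0.
  have [S0 hS0 hmax] := eq_bigmax_cond (fun S : {set 'I_n} => #|S|) A0.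
  move: hk; rewrite /hnum hmax => hk.
  have : 0 < #|[set A : {set 'I_n} | A \subset S0 & #|A| == k]| by rewrite cards_draws bin_gt0.
  case/card_gt0P => S; rewrite inE => /andP[sS /eqP hS].
  move: gb; rewrite inE => /existsP; apply; exists S; rewrite hS eqxx /=.
  exact: hom_sub sS hS0.
apply: leq_ltn_trans hg.
rewrite /h_rnQ; apply: bigmin_le_seq; first exact: mem_index_enum.
by rewrite Eg_uniform Eg_Qfree.
Qed.

Lemma h_lower n s : 4 ^ s <= n.-1 -> s.+1 <= h_rnQ 3 n QQ.
Proof.
move=> hs; rewrite /h_rnQ.
elim/big_rec: _ => [|E m /andP[hu hq] IH].
  have : s < 4 ^ s by apply: ltn_expl.
  lia.
by rewrite leq_min IH andbT; apply: hnum_lower hs.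
Qed.

Lemma expn_pow m k : expn m k = Nat.pow m k.
Proof. elim: k => [//|k IH]; by rewrite expnS IH. Qed.

Lemma INR_exp2 k : INR (expn 2 k) = (2 ^ k)%R.
Proof. by rewrite expn_pow pow_INR. Qed.

Lemma ln_le' x y : (0 < x)%R -> (x <= y)%R -> (ln x <= ln y)%R.
Proof.
move=> hx hxy; case: (Rle_lt_or_eq_dec _ _ hxy) => h.
  by apply: Rlt_le; apply: ln_increasing.
by rewrite h; apply: Rle_refl.
Qed.

Lemma ln2_pos : (0 < ln 2)%R.
Proof. have := ln_lt_2; lra. Qed.

Lemma log2_ge (n m : nat) : (expn 2 m <= n)%N -> (INR m <= log2 (INR n))%R.
Proof.
move=> h.
have h1 : (0 < INR (expn 2 m))%R by rewrite INR_exp2; apply: pow_lt; lra.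
have h2 : (ln (INR (expn 2 m)) <= ln (INR n))%R.
  by apply: ln_le' => //; apply: le_INR; apply/leP.
rewrite INR_exp2 ln_pow in h2; last lra.
have l2 := ln2_pos.
rewrite /log2; apply: (Rmult_le_reg_r (ln 2)) => //.
rewrite /Rdiv Rmult_assoc Rinv_l; lra.
Qed.

Lemma log2_le (n m : nat) : (0 < n)%N -> (n <= expn 2 m)%N -> (log2 (INR n) <= INR m)%R.
Proof.
move=> n0 h.
have h1 : (0 < INR n)%R by apply: lt_0_INR; apply/ltP.
have h2 : (ln (INR n) <= ln (INR (expn 2 m)))%R.
  by apply: ln_le' => //; apply: le_INR; apply/leP.
rewrite INR_exp2 ln_pow in h2; last lra.
have l2 := ln2_pos.
rewrite /log2; apply: (Rmult_le_reg_r (ln 2)) => //.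
rewrite /Rdiv Rmult_assoc Rinv_l; lra.
Qed.

Lemma bin_le_exp n k : ('C(n, k) <= n ^ k)%N.
Proof.
have h : (n ^_ k <= n ^ k)%N.
  elim: k => [|k IH]; first by rewrite ffactn0.
  rewrite ffactnSr expnS mulnC; apply: leq_mul => //; exact: leq_subr.
apply: leq_trans h; rewrite -bin_ffact; apply: leq_pmulr; exact: fact_gt0.
Qed.

Lemma numeric n m : (4 <= m)%N -> (n < expn 2 m.+1)%N ->
  ('C(n, 4 * (m * m)) * (4 * (m * m) * 2) < expn 2 'C((4 * (m * m)).-1, 2))%N.
Proof.
move=> m4 hn.
set k := 4 * (m * m).
have k0 : (0 < k)%N by rewrite /k; nia.
have h1 : ('C(n, k) <= expn 2 (m.+1 * k))%N.
  apply: leq_trans (bin_le_exp n k) _.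
  rewrite expnM leq_exp2r //; exact: ltnW.
have h2 : (k * 2 < expn 2 k.+1)%N by rewrite expnS mulnC ltn_pmul2l // ltn_expl.
have h3 : (m.+1 * k + k.+1 <= 'C(k.-1, 2))%N.
  rewrite bin2 geq_half_double.
  have e1 : k.-1 = k - 1 by lia.
  have e2 : (k - 1).-1 = k - 2 by lia.
  rewrite e1 e2 -mul2n.
  have hk : (64 <= k)%N by rewrite /k; nia.
  rewrite /k; nia.
apply: (@leq_trans (expn 2 (m.+1 * k) * expn 2 k.+1)).
  apply: (@leq_ltn_trans (expn 2 (m.+1 * k) * (k * 2))).
    by apply: leq_mul.
  by rewrite ltn_pmul2l // expn_gt0.
by rewrite -expnD leq_exp2l.
Qed.

Theorem mainTheorem7 :
  exists N : nat, forall n : nat, (N <= n)%N ->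
    (/ 2 * log2 (INR n) <= INR (h_rnQ 3 n [:: (4%nat, 1%nat); (4%nat, 3%nat)])
     /\ INR (h_rnQ 3 n [:: (4%nat, 1%nat); (4%nat, 3%nat)]) < 4 * (log2 (INR n)) ^ 2)%R.
Proof.
exists 16 => n hn.
have n0 : (0 < n)%N by lia.
change [:: (4%nat, 1%nat); (4%nat, 3%nat)] with QQ.
split.
- set s := trunc_log 4 n.-1.
  have hs : (expn 4 s <= n.-1)%N by apply: trunc_logP => //; lia.
  have hlt : (n.-1 < expn 4 s.+1)%N by apply: trunc_log_ltn.
  have hl := h_lower hs.
  have h4 : expn 4 s.+1 = expn 2 (2 * s.+1) by rewrite expnM.
  have hn2 : (n <= expn 2 (2 * s.+1))%N by rewrite -h4 -[n](prednK n0).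
  have hL := log2_le n0 hn2.
  have hI : (INR s.+1 <= INR (h_rnQ 3 n QQ))%R by apply: le_INR; apply/leP.
  rewrite mult_INR in hL.
  have e2 : INR 2 = 2%R by simpl; lra.
  rewrite e2 in hL; lra.
- set m := trunc_log 2 n.
  have hm : (expn 2 m <= n)%N by apply: trunc_logP.
  have hlt : (n < expn 2 m.+1)%N by apply: trunc_log_ltn.
  have m4 : (4 <= m)%N by apply: trunc_log_max => //; apply: leq_trans hn.
  have k0 : (0 < 4 * (m * m))%N by nia.
  have hu := h_upper k0 (numeric m4 hlt).
  have hI : (INR (h_rnQ 3 n QQ) < INR (4 * (m * m)))%R by apply: lt_INR; apply/ltP.
  rewrite !mult_INR /= in hI.
  have hg := log2_ge hm.
  have hp := pos_INR m.
  simpl; nra.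
Qed.
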